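(* Let $\beta,k\in\mathbb{R}$, $r>0$, and let $\gamma\in C^2([0,r])$ satisfy $-\gamma''-\beta|\gamma'|=k$ and $\gamma'>0$ in $(0,r)$. Let $\varepsilon>0$ and suppose that $r\ge2\varepsilon$ or $\gamma'(r)=0$. Then, with $r_1:=\min\{\varepsilon,r\}$ and $r_2:=\min\{2\varepsilon,r\}$, $$a^+_\varepsilon(\beta)\big(\gamma(r_1)-\gamma(0)\big)-a^-_\varepsilon(\beta)\big(\gamma(r_2)-\gamma(r_1)\big)\le\varepsilon k.$$
   Context: Coefficients: for $\beta\neq0$, $a^+_\varepsilon(\beta):=\frac{\beta}{e^{\varepsilon\beta}-1}$ and $a^-_\varepsilon(\beta):=\frac{\beta}{1-e^{-\varepsilon\beta}}$; for $\beta=0$, $a^+_\varepsilon(0):=a^-_\varepsilon(0):=1/\varepsilon$. *)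

(* Defs.v *)
From Stdlib Require Import Reals.
Open Scope R_scope.

Definition a_plus (eps beta : R) : R :=
  if Req_EM_T beta 0 then 1 / eps else beta / (exp (eps * beta) - 1).
Definition a_minus (eps beta : R) : R :=
  if Req_EM_T beta 0 then 1 / eps else beta / (1 - exp (- (eps * beta))).

Definition deriv_on (a b : R) (f f' : R -> R) : Prop :=
  forall x, a <= x <= b ->
  forall e, 0 < e -> exists d, 0 < d /\
    forall y, a <= y <= b -> Rabs (y - x) < d ->
      Rabs (f y - f x - f' x * (y - x)) <= e * Rabs (y - x).

Definition cont_on (a b : R) (f : R -> R) : Prop :=
  forall x, a <= x <= b ->
  forall e, 0 < e -> exists d, 0 < d /\
    forall y, a <= y <= b -> Rabs (y - x) < d -> Rabs (f y - f x) < e.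

Definition C2_on (a b : R) (g g1 g2 : R -> R) : Prop :=
  deriv_on a b g g1 /\ deriv_on a b g1 g2 /\ cont_on a b g2.

(* Main.v *)
Require Import Defs.
From Stdlib Require Import Reals Lra Psatz.
Open Scope R_scope.

Definition cl (a b y : R) := Rmax a (Rmin y b).

Lemma cl_id a b x : a <= x <= b -> cl a b x = x.
Proof. intros. unfold cl, Rmax, Rmin; repeat destruct Rle_dec; lra. Qed.

Lemma cl_in a b y : a <= b -> a <= cl a b y <= b.
Proof. intros. unfold cl, Rmax, Rmin; repeat destruct Rle_dec; lra. Qed.

Lemma cl_lip a b y z : a <= b -> Rabs (cl a b y - cl a b z) <= Rabs (y - z).
Proof. intros. unfold cl, Rmax, Rmin; repeat destruct Rle_dec; unfold Rabs;
  repeat destruct Rcase_abs; lra. Qed.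

Lemma cont_cl a b f x : a <= b -> cont_on a b f -> a <= x <= b ->
  continuity_pt (fun y => f (cl a b y)) x.
Proof.
  intros Hab Hf Hx. unfold continuity_pt, continue_in, limit1_in, limit_in.
  intros e He. simpl. unfold R_dist.
  destruct (Hf x Hx e He) as [d [Hd H]]. exists d; split; auto.
  intros y [_ Hy]. rewrite (cl_id a b x Hx). apply H. apply cl_in; auto.
  pose proof (cl_lip a b y x Hab) as L. rewrite (cl_id a b x Hx) in L. lra.
Qed.

Lemma deriv_cl a b f f' x : deriv_on a b f f' -> a < x < b ->
  derivable_pt_lim (fun y => f (cl a b y)) x (f' x).
Proof.
  intros Hd Hx e He.
  destruct (Hd x (conj (Rlt_le _ _ (proj1 Hx)) (Rlt_le _ _ (proj2 Hx))) (e/2) ltac:(lra))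
    as [d [Hd0 Hf]].
  assert (Hm : 0 < Rmin d (Rmin (x - a) (b - x))).
  { repeat apply Rmin_pos; lra. }
  exists (mkposreal _ Hm). intros h Hh0 Hh. simpl in Hh.
  pose proof (Rmin_l d (Rmin (x - a) (b - x))).
  pose proof (Rmin_r d (Rmin (x - a) (b - x))).
  pose proof (Rmin_l (x - a) (b - x)). pose proof (Rmin_r (x - a) (b - x)).
  destruct (Rabs_def2 _ _ Hh) as [Hh1 Hh2].
  assert (Hin : a <= x + h <= b) by lra.
  rewrite (cl_id a b (x+h) Hin), (cl_id a b x (conj (Rlt_le _ _ (proj1 Hx)) (Rlt_le _ _ (proj2 Hx)))).
  assert (Hy : Rabs (x + h - x) < d).
  { replace (x + h - x) with h by ring. lra. }
  specialize (Hf (x+h) Hin Hy). replace (x + h - x) with h in Hf by ring.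
  replace ((f (x + h) - f x) / h - f' x) with ((f (x + h) - f x - f' x * h) / h) by (field; auto).
  unfold Rdiv. rewrite Rabs_mult, Rabs_inv.
  pose proof (Rabs_pos_lt h Hh0).
  apply Rle_lt_trans with (e/2); [|lra].
  apply Rmult_le_reg_r with (Rabs h); auto.
  rewrite Rmult_assoc, Rinv_l by lra. lra.
Qed.

Lemma deriv_cont a b f f' : deriv_on a b f f' -> cont_on a b f.
Proof.
  intros Hd x Hx e He.
  destruct (Hd x Hx 1 Rlt_0_1) as [d [Hd0 Hf]].
  pose proof (Rabs_pos (f' x)) as HA.
  assert (Hq : 0 < e / (Rabs (f' x) + 2)) by (apply Rdiv_lt_0_compat; lra).
  exists (Rmin d (e / (Rabs (f' x) + 2))). split. apply Rmin_pos; lra.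
  intros y Hy Hyx.
  pose proof (Rmin_l d (e / (Rabs (f' x) + 2))).
  pose proof (Rmin_r d (e / (Rabs (f' x) + 2))).
  specialize (Hf y Hy ltac:(lra)).
  assert (Hq2 : e / (Rabs (f' x) + 2) * (Rabs (f' x) + 2) = e) by (field; lra).
  pose proof (Rabs_triang (f y - f x - f' x * (y - x)) (f' x * (y - x))) as T.
  replace (f y - f x - f' x * (y - x) + f' x * (y - x)) with (f y - f x) in T by ring.
  rewrite Rabs_mult in T. pose proof (Rabs_pos (y - x)).
  nra.
Qed.

Lemma const_lemma a b F : a <= b ->
  (forall x, a < x < b -> derivable_pt_lim F x 0) ->
  (forall x, a <= x <= b -> continuity_pt F x) ->
  forall x, a <= x <= b -> F x = F a.
Proof.
  intros Hab Hd Hc.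
  assert (pr : forall x, a < x < b -> derivable_pt F x) by (intros x Hx; exists 0; exact (Hd x Hx)).
  pose proof (null_derivative_loc F a b pr Hc
     (fun x P => derive_pt_eq_0 _ _ _ (pr x P) (Hd x P))) as C.
  intros x Hx. apply C. exact Hx.
Qed.

Lemma deriv_id a b : deriv_on a b (fun y => y) (fun _ => 1).
Proof. intros x Hx e He. exists 1. split; [lra|]. intros y _ _.
  replace (y - x - 1 * (y - x)) with 0 by ring. rewrite Rabs_R0.
  pose proof (Rabs_pos (y - x)). nra. Qed.

Lemma cl_d a b x : a < x < b -> derivable_pt_lim (cl a b) x 1.
Proof. intros. exact (deriv_cl a b (fun y => y) (fun _ => 1) x (deriv_id a b) H). Qed.

Lemma cl_c a b x : a <= b -> a <= x <= b -> continuity_pt (cl a b) x.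
Proof. intros. exact (cont_cl a b (fun y => y) x H (deriv_cont _ _ _ _ (deriv_id a b)) H0). Qed.

Lemma expcl_d a b c x : a < x < b ->
  derivable_pt_lim (fun y => exp (c * cl a b y)) x (c * exp (c * x)).
Proof.
  intros Hx.
  assert (H1 : derivable_pt_lim (fun y => c * cl a b y) x (c * 1)).
  { exact (derivable_pt_lim_scal (cl a b) c x 1 (cl_d a b x Hx)). }
  pose proof (derivable_pt_lim_comp _ exp x _ _ H1 (derivable_pt_lim_exp (c * cl a b x))) as H.
  rewrite cl_id in H by lra. unfold comp in H. replace (c * exp (c * x)) with (exp (c * x) * (c * 1)) by ring.
  exact H.
Qed.

Lemma expcl_c a b c x : a <= b -> a <= x <= b ->
  continuity_pt (fun y => exp (c * cl a b y)) x.
Proof.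
  intros Hab Hx.
  assert (H1 : continuity_pt (fun y => c * cl a b y) x).
  { exact (continuity_pt_scal (cl a b) c x (cl_c a b x Hab Hx)). }
  exact (continuity_pt_comp _ exp x H1 (derivable_continuous_pt _ _ (derivable_pt_exp _))).
Qed.

Lemma dlim_val f x l l' : derivable_pt_lim f x l -> l = l' -> derivable_pt_lim f x l'.
Proof. intros H ->; exact H. Qed.
Lemma dmul' f g x a b : derivable_pt_lim f x a -> derivable_pt_lim g x b ->
  derivable_pt_lim (fun y => f y * g y) x (a * g x + f x * b).
Proof. exact (derivable_pt_lim_mult f g x a b). Qed.
Lemma dadd' f g x a b : derivable_pt_lim f x a -> derivable_pt_lim g x b ->
  derivable_pt_lim (fun y => f y + g y) x (a + b).
Proof. exact (derivable_pt_lim_plus f g x a b). Qed.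
Lemma dconst' c x : derivable_pt_lim (fun _ => c) x 0.
Proof. exact (derivable_pt_lim_const c x). Qed.
Lemma dscal' c f x a : derivable_pt_lim f x a -> derivable_pt_lim (fun y => c * f y) x (c * a).
Proof. exact (derivable_pt_lim_scal f c x a). Qed.
Lemma cmul' f g x : continuity_pt f x -> continuity_pt g x -> continuity_pt (fun y => f y * g y) x.
Proof. exact (continuity_pt_mult f g x). Qed.
Lemma cadd' f g x : continuity_pt f x -> continuity_pt g x -> continuity_pt (fun y => f y + g y) x.
Proof. exact (continuity_pt_plus f g x). Qed.
Lemma cconst' c x : continuity_pt (fun _ => c) x.
Proof. apply derivable_continuous_pt. exists 0. exact (dconst' c x). Qed.
Lemma cscal' c f x : continuity_pt f x -> continuity_pt (fun y => c * f y) x.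
Proof. exact (continuity_pt_scal f c x). Qed.

Lemma sgn_exp b t : 0 < t -> b <> 0 -> 0 < b * (1 - exp (- b * t)).
Proof.
  intros Ht Hb. destruct (Rlt_or_le 0 b) as [H|H].
  - assert (exp (-b*t) < exp 0) by (apply exp_increasing; nra). rewrite exp_0 in H0. nra.
  - assert (b < 0) by lra. assert (exp 0 < exp (-b*t)) by (apply exp_increasing; nra).
    rewrite exp_0 in H1. nra.
Qed.

Lemma div_pos_sign n d : 0 < d -> 0 < n / d -> 0 < n.
Proof. intros. replace n with (n / d * d) by (field; lra). nra. Qed.

Lemma caseA beta k eps g0 g1 g2 A u :
  beta <> 0 -> 0 < u -> u <> 1 ->
  g1 = g0 + A/beta - A/beta * u - k/beta * eps ->
  g2 = g0 + A/beta - A/beta * (u*u) - k/beta * (2*eps) ->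
  beta / (/u - 1) * (g1 - g0) - beta / (1 - u) * (g2 - g1) = eps * k.
Proof.
  intros. subst. assert (/u - 1 <> 0).
  { intro Hc. assert (Hu: /u = 1) by lra. apply H1. rewrite <- (Rinv_inv u), Hu. apply Rinv_1. }
  field. repeat split; try lra.
Qed.

Lemma inv_ne1 u : 0 < u -> u <> 1 -> /u - 1 <> 0.
Proof. intros H H1 Hc. assert (Hu: /u = 1) by lra. apply H1. rewrite <- (Rinv_inv u), Hu. apply Rinv_1. Qed.

Lemma caseB1 beta k eps r g0 g1 g2 u v :
  beta <> 0 -> 0 < u -> u <> 1 -> 0 < v -> 0 < k -> 0 < beta * (1 - u) ->
  1 + beta * (r - 2*eps) <= u * u / v ->
  g1 = g0 + k/(beta*v)/beta - k/(beta*v)/beta * u - k/beta * eps ->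
  g2 = g0 + k/(beta*v)/beta - k/(beta*v)/beta * v - k/beta * r ->
  beta / (/u - 1) * (g1 - g0) - beta / (1 - u) * (g2 - g1) <= eps * k.
Proof.
  intros. pose proof (inv_ne1 u H0 H1).
  assert (E : beta / (/u - 1) * (g1 - g0) - beta / (1 - u) * (g2 - g1) =
     eps * k + k / (beta * (1 - u)) * (1 - u*u/v - beta*(2*eps - r))).
  { subst. field. repeat split; try lra. }
  rewrite E. assert (0 < k / (beta * (1 - u))) by (apply Rdiv_lt_0_compat; lra).
  assert (1 - u*u/v - beta*(2*eps - r) <= 0) by lra. nra.
Qed.

Lemma caseB2 beta k eps r g0 g2 u v :
  beta <> 0 -> 0 < u -> u <> 1 -> 0 < v -> 0 < k -> 0 < beta * (1 - u) ->
  /u - /v >= beta * (eps - r) -> u >= 1 - beta * eps ->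
  g2 = g0 + k/(beta*v)/beta - k/(beta*v)/beta * v - k/beta * r ->
  beta / (/u - 1) * (g2 - g0) <= eps * k.
Proof.
  intros. pose proof (inv_ne1 u H0 H1).
  assert (E : beta / (/u - 1) * (g2 - g0) =
     eps * k + k * u / (beta * (1 - u)) * ((/v - 1 - beta * r) - beta * eps * (/u - 1))).
  { subst. field. repeat split; try lra. }
  rewrite E. assert (0 < k * u / (beta * (1 - u))) by (apply Rdiv_lt_0_compat; nra).
  assert (u * /u = 1) by (field; lra). assert (0 < /u) by (apply Rinv_0_lt_compat; lra).
  assert (1 >= /u - beta*eps * /u) by nra.
  assert ((/v - 1 - beta * r) - beta * eps * (/u - 1) <= 0) by nra. nra.
Qed.

Theorem lemma3p2 (beta k r eps : R) (gamma g1 g2 : R -> R) :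
  0 < r ->
  C2_on 0 r gamma g1 g2 ->
  (forall x, 0 < x < r -> - g2 x - beta * Rabs (g1 x) = k) ->
  (forall x, 0 < x < r -> 0 < g1 x) ->
  0 < eps ->
  (2 * eps <= r \/ g1 r = 0) ->
  let r1 := Rmin eps r in
  let r2 := Rmin (2 * eps) r in
  a_plus eps beta * (gamma r1 - gamma 0)
    - a_minus eps beta * (gamma r2 - gamma r1) <= eps * k.
Proof.
  intros Hr [Hd1 [Hd2 Hc2]] Hode Hpos He Hor r1 r2.
  assert (Hr0 : 0 <= r) by lra.
  assert (Hg2 : forall x, 0 < x < r -> g2 x = - k - beta * g1 x).
  { intros x Hx. specialize (Hode x Hx). rewrite Rabs_pos_eq in Hode by (apply Rlt_le, Hpos, Hx). lra. }
  assert (G1d : forall x, 0 < x < r -> derivable_pt_lim (fun y => g1 (cl 0 r y)) x (g2 x))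
    by (intros; apply (deriv_cl 0 r g1 g2 x Hd2); auto).
  assert (G1c : forall x, 0 <= x <= r -> continuity_pt (fun y => g1 (cl 0 r y)) x)
    by (intros; apply (cont_cl 0 r g1 x Hr0 (deriv_cont _ _ _ _ Hd2)); auto).
  assert (Gd : forall x, 0 < x < r -> derivable_pt_lim (fun y => gamma (cl 0 r y)) x (g1 x))
    by (intros; apply (deriv_cl 0 r gamma g1 x Hd1); auto).
  assert (Gc : forall x, 0 <= x <= r -> continuity_pt (fun y => gamma (cl 0 r y)) x)
    by (intros; apply (cont_cl 0 r gamma x Hr0 (deriv_cont _ _ _ _ Hd1)); auto).
  assert (H0r : 0 <= 0 <= r) by lra.
  destruct (Req_EM_T beta 0) as [Hb|Hb].
  -
    subst beta. set (C := g1 0).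
    assert (Hg1 : forall x, 0 <= x <= r -> g1 x = C - k * x).
    { intros x Hx.
      pose proof (const_lemma 0 r (fun y => g1 (cl 0 r y) + k * cl 0 r y) Hr0) as CL.
      assert (D : forall x, 0 < x < r -> derivable_pt_lim (fun y => g1 (cl 0 r y) + k * cl 0 r y) x 0).
      { intros z Hz. eapply dlim_val.
        - apply dadd'; [apply G1d; auto | apply dscal'; apply cl_d; auto].
        - rewrite Hg2 by auto. ring. }
      assert (Cc : forall x, 0 <= x <= r -> continuity_pt (fun y => g1 (cl 0 r y) + k * cl 0 r y) x).
      { intros z Hz. apply cadd'; [apply G1c; auto | apply cscal'; apply cl_c; auto]. }
      specialize (CL D Cc x Hx). simpl in CL. rewrite !cl_id in CL by lra. unfold C. lra. }
    assert (Hgam : forall x, 0 <= x <= r -> gamma x = gamma 0 + C * x - k / 2 * (x * x)).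
    { intros x Hx.
      pose proof (const_lemma 0 r (fun y => gamma (cl 0 r y) + (- C) * cl 0 r y + k / 2 * (cl 0 r y * cl 0 r y)) Hr0) as CL.
      assert (D : forall x, 0 < x < r -> derivable_pt_lim (fun y => gamma (cl 0 r y) + (- C) * cl 0 r y + k / 2 * (cl 0 r y * cl 0 r y)) x 0).
      { intros z Hz. eapply dlim_val.
        - apply dadd'; [apply dadd'; [apply Gd; auto | apply dscal'; apply cl_d; auto] |
            apply dscal'; apply dmul'; apply cl_d; auto].
        - rewrite Hg1 by lra. rewrite cl_id by lra. lra. }
      assert (Cc : forall x, 0 <= x <= r -> continuity_pt (fun y => gamma (cl 0 r y) + (- C) * cl 0 r y + k / 2 * (cl 0 r y * cl 0 r y)) x).
      { intros z Hz. apply cadd'; [apply cadd'; [apply Gc; auto | apply cscal'; apply cl_c; auto] |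
            apply cscal'; apply cmul'; apply cl_c; auto]. }
      specialize (CL D Cc x Hx). simpl in CL. rewrite !cl_id in CL by lra. lra. }
    assert (Ha : a_plus eps 0 = 1 / eps) by (unfold a_plus; destruct Req_EM_T; [reflexivity | lra]).
    assert (Hm : a_minus eps 0 = 1 / eps) by (unfold a_minus; destruct Req_EM_T; [reflexivity | lra]).
    rewrite Ha, Hm. unfold r1, r2.
    destruct (Rle_dec (2 * eps) r) as [H2|H2].
    + rewrite Rmin_left by lra. rewrite Rmin_left by lra.
      rewrite (Hgam eps) by lra. rewrite (Hgam (2 * eps)) by lra.
      right. field. lra.
    + assert (Hg1r : g1 r = 0) by (destruct Hor; [lra | auto]).
      rewrite Hg1 in Hg1r by lra.
      assert (Hk : 0 < k).
      { pose proof (Hpos (r/2) ltac:(lra)). rewrite Hg1 in H by lra. nra. }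
      assert (HC : C = k * r) by lra.
      destruct (Rle_dec eps r) as [H3|H3].
      * rewrite Rmin_left by lra. rewrite Rmin_right by lra.
        rewrite (Hgam eps) by lra. rewrite (Hgam r) by lra. rewrite HC.
        replace (1 / eps * (gamma 0 + k * r * eps - k / 2 * (eps * eps) - gamma 0) -
          1 / eps * (gamma 0 + k * r * r - k / 2 * (r * r) - (gamma 0 + k * r * eps - k / 2 * (eps * eps))))
          with (eps * k - k * ((r - 2 * eps) * (r - 2 * eps)) / (2 * eps)) by (field; lra).
        assert (0 <= k * ((r - 2 * eps) * (r - 2 * eps)) / (2 * eps)).
        { unfold Rdiv. apply Rmult_le_pos; [apply Rmult_le_pos; [lra | nra] | left; apply Rinv_0_lt_compat; lra]. }
        lra.
      * rewrite Rmin_right by lra. rewrite Rmin_right by lra.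
        rewrite (Hgam r) by lra. rewrite HC.
        replace (1 / eps * (gamma 0 + k * r * r - k / 2 * (r * r) - gamma 0) -
          1 / eps * (gamma 0 + k * r * r - k / 2 * (r * r) - (gamma 0 + k * r * r - k / 2 * (r * r))))
          with (eps * k - k * (2 * eps * eps - r * r) / (2 * eps)) by (field; lra).
        assert (0 <= k * (2 * eps * eps - r * r) / (2 * eps)).
        { unfold Rdiv. apply Rmult_le_pos; [apply Rmult_le_pos; [lra | nra] | left; apply Rinv_0_lt_compat; lra]. }
        lra.
  - set (A := g1 0 + k / beta).
    assert (Hg1 : forall x, 0 <= x <= r -> g1 x = A * exp (- beta * x) - k / beta).
    { intros x Hx.
      pose proof (const_lemma 0 r (fun y => (g1 (cl 0 r y) + k / beta) * exp (beta * cl 0 r y)) Hr0) as CL.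
      assert (D : forall x, 0 < x < r -> derivable_pt_lim (fun y => (g1 (cl 0 r y) + k / beta) * exp (beta * cl 0 r y)) x 0).
      { intros z Hz. eapply dlim_val.
        - apply dmul'; [apply dadd'; [apply G1d; auto | apply dconst'] | apply expcl_d; auto].
        - rewrite Hg2 by auto. rewrite cl_id by lra. field. auto. }
      assert (Cc : forall x, 0 <= x <= r -> continuity_pt (fun y => (g1 (cl 0 r y) + k / beta) * exp (beta * cl 0 r y)) x).
      { intros z Hz. apply cmul'; [apply cadd'; [apply G1c; auto | apply cconst'] | apply expcl_c; auto]. }
      specialize (CL D Cc x Hx). simpl in CL. rewrite !cl_id in CL by lra.
      rewrite Rmult_0_r, exp_0, Rmult_1_r in CL.
      assert (E1 : exp (beta * x) * exp (- beta * x) = 1).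
      { rewrite <- exp_plus. replace (beta * x + - beta * x) with 0 by ring. apply exp_0. }
      assert (E2 : g1 x + k / beta = A * exp (- beta * x)).
      { transitivity ((g1 x + k / beta) * (exp (beta * x) * exp (- beta * x))).
        - rewrite E1; ring.
        - rewrite <- Rmult_assoc, CL. reflexivity. }
      lra. }
    assert (Hgam : forall x, 0 <= x <= r -> gamma x = gamma 0 + A / beta - A / beta * exp (- beta * x) - k / beta * x).
    { intros x Hx.
      pose proof (const_lemma 0 r (fun y => gamma (cl 0 r y) + A / beta * exp (- beta * cl 0 r y) + k / beta * cl 0 r y) Hr0) as CL.
      assert (D : forall x, 0 < x < r -> derivable_pt_lim (fun y => gamma (cl 0 r y) + A / beta * exp (- beta * cl 0 r y) + k / beta * cl 0 r y) x 0).
      { intros z Hz. eapply dlim_val.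
        - apply dadd'; [apply dadd'; [apply Gd; auto | apply dscal'; apply expcl_d; auto] |
            apply dscal'; apply cl_d; auto].
        - rewrite Hg1 by lra. field. auto. }
      assert (Cc : forall x, 0 <= x <= r -> continuity_pt (fun y => gamma (cl 0 r y) + A / beta * exp (- beta * cl 0 r y) + k / beta * cl 0 r y) x).
      { intros z Hz. apply cadd'; [apply cadd'; [apply Gc; auto | apply cscal'; apply expcl_c; auto] |
            apply cscal'; apply cl_c; auto]. }
      specialize (CL D Cc x Hx). simpl in CL. rewrite !cl_id in CL by lra.
      rewrite Rmult_0_r, exp_0 in CL. lra. }
    clearbody A.
    set (u := exp (- beta * eps)).
    assert (Hu0 : 0 < u) by apply exp_pos.
    assert (Hu1 : u <> 1).
    { intro H. unfold u in H. rewrite <- exp_0 in H. apply exp_inv in H. nra. }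
    assert (Hep : exp (eps * beta) = / u).
    { unfold u. rewrite <- exp_Ropp. f_equal. ring. }
    assert (Hem : exp (- (eps * beta)) = u).
    { unfold u. f_equal. ring. }
    assert (Ha : a_plus eps beta = beta / (/ u - 1)) by (unfold a_plus; destruct Req_EM_T; [contradiction | rewrite Hep; reflexivity]).
    assert (Hm : a_minus eps beta = beta / (1 - u)) by (unfold a_minus; destruct Req_EM_T; [contradiction | rewrite Hem; reflexivity]).
    rewrite Ha, Hm. unfold r1, r2.
    assert (Hsu : 0 < beta * (1 - u)) by (apply sgn_exp; auto).
    destruct (Rle_dec (2 * eps) r) as [H2|H2].
    + rewrite Rmin_left by lra. rewrite Rmin_left by lra.
      right. apply (caseA beta k eps (gamma 0) _ _ A u); auto.
      * rewrite (Hgam eps) by lra. reflexivity.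
      * rewrite (Hgam (2 * eps)) by lra.
        replace (- beta * (2 * eps)) with (- beta * eps + - beta * eps) by ring.
        rewrite exp_plus. reflexivity.
    + assert (Hg1r : g1 r = 0) by (destruct Hor; [lra | auto]).
      set (v := exp (- beta * r)).
      assert (Hv0 : 0 < v) by apply exp_pos.
      rewrite Hg1 in Hg1r by lra. fold v in Hg1r.
      assert (HAv : A * v = k / beta) by lra.
      assert (HA : A = k / (beta * v)).
      { replace A with (A * v / v) by (field; lra). rewrite HAv. field. split; lra. }
      set (s := exp (- beta * (r / 2))).
      assert (Hs0 : 0 < s) by apply exp_pos.
      assert (Hvs : v = s * s).
      { unfold v, s. rewrite <- exp_plus. f_equal. field. }
      assert (Hss : 0 < beta * (1 - s)) by (apply sgn_exp; lra).
      assert (Hk : 0 < k).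
      { pose proof (Hpos (r/2) ltac:(lra)) as P. rewrite Hg1 in P by lra. fold s in P.
        rewrite HA, Hvs in P.
        replace (k / (beta * (s * s)) * s - k / beta) with ((k * (beta * (1 - s))) / (beta * beta * s)) in P
          by (field; split; lra).
        apply div_pos_sign in P; [| apply Rmult_lt_0_compat; [nra | lra]].
        destruct (Rle_lt_dec k 0); nra. }
      destruct (Rle_dec eps r) as [H3|H3].
      * rewrite Rmin_left by lra. rewrite Rmin_right by lra.
        apply (caseB1 beta k eps r (gamma 0) _ _ u v); auto.
        -- pose proof (exp_ineq1_le (beta * (r - 2 * eps))) as T.
           replace (beta * (r - 2 * eps)) with (- beta * eps + - beta * eps + - (- beta * r)) in T by ring.
           rewrite !exp_plus, exp_Ropp in T. fold u v in T. unfold Rdiv. lra.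
        -- rewrite (Hgam eps) by lra. rewrite HA. reflexivity.
        -- rewrite (Hgam r) by lra. rewrite HA. reflexivity.
      * rewrite Rmin_right by lra. rewrite Rmin_right by lra.
        replace (gamma r - gamma r) with 0 by ring. rewrite Rmult_0_r, Rminus_0_r.
        apply (caseB2 beta k eps r (gamma 0) _ u v); auto.
        -- set (X := exp (beta * eps)). set (Y := exp (beta * r)).
           assert (HX : / u = X) by (unfold u, X; rewrite <- exp_Ropp; f_equal; ring).
           assert (HY : / v = Y) by (unfold v, Y; rewrite <- exp_Ropp; f_equal; ring).
           rewrite HX, HY.
           set (Z := exp (beta * (eps - r))).
           assert (HXZ : X = Y * Z) by (unfold X, Y, Z; rewrite <- exp_plus; f_equal; ring).
           assert (HZ : 1 + beta * (eps - r) <= Z) by apply exp_ineq1_le.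
           assert (HY0 : 0 < Y) by apply exp_pos.
           assert (HYv : Y * v = 1) by (rewrite <- HY; field; lra).
           assert (Hsv : 0 < beta * (1 - v)) by (apply sgn_exp; lra).
           assert (HbY : 0 <= beta * (Y - 1)) by nra.
           nra.
        -- pose proof (exp_ineq1_le (- beta * eps)) as T. fold u in T. lra.
        -- rewrite (Hgam r) by lra. rewrite HA. reflexivity.
Qed.
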